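(* Let $G$ be a connected graph on $n\ge 2$ vertices and let $\partial_1(G)$ be the spectral radius (largest eigenvalue) of its distance matrix $D(G)$. Then $\gamma(G)\le \dfrac{n}{\partial_1(G)}$, with equality if and only if $G$ is transmission-regular.
   Context: For a finite simple undirected graph $G$ with $n$ vertices, let $\mathcal{F}=\{x\in\mathbb{R}^{V(G)} : \sum_{v} x_v = 0,\ \|x\|_\infty = 1\}$, for $x\in\mathcal{F}$ let $\gamma_x(G)=\max_{uv\in E(G)}|x_u-x_v|$, and $\gamma(G)=\min_{x\in\mathcal{F}}\gamma_x(G)$. For a connected graph, the distance matrix $D(G)$ has $(u,v)$-entry the shortest-path distance $d(u,v)$; the transmission of $u$ is $\operatorname{tr}(u)=\sum_v d(u,v)$; $G$ is transmission-regular if all vertices have the same transmission. *)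

(* Defs.v *)
From HB Require Import structures.
From mathcomp Require Import all_boot all_order all_algebra.
From mathcomp Require Import classical_sets reals.
Set Implicit Arguments. Unset Strict Implicit. Unset Printing Implicit Defensive.
Import Order.TTheory GRing.Theory Num.Theory.
Local Open Scope ring_scope.
Local Open Scope classical_set_scope.

(* A finite simple undirected graph: vertex type T : finType, adjacency
   e : rel T assumed symmetric and irreflexive (hypotheses of the theorem). *)

Section Graph.
Variables (T : finType) (e : rel T).

Definition walk_of_len (u v : T) (k : nat) : bool :=
  [exists p : k.-tuple T, path e u p && (last u p == v)].

(* shortest-path distance: the least k < #|T| with a walk of length k from u
   to v (for a connected graph this is the usual distance d(u,v), since a
   shortest walk is a path with at most #|T|-1 edges). *)
Definition gdist (u v : T) : nat :=
  find (walk_of_len u v) (iota 0 #|T|).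

Variable R : realType.

Definition distmx : 'M[R]_#|T| :=
  \matrix_(i, j) (gdist (enum_val i) (enum_val j))%:R.

Definition dist_spec_radius : R := sup [set a : R | eigenvalue distmx a].

Definition transmission (u : T) : nat := (\sum_(v : T) gdist u v)%N.

Definition transmission_regular : Prop :=
  forall u v : T, transmission u = transmission v.

Definition sup_norm (x : T -> R) : R := \big[Num.max/0]_(v : T) `|x v|.

Definition feasible : set (T -> R) :=
  [set x | \sum_(v : T) x v = 0 /\ sup_norm x = 1].

Definition gamma_x (x : T -> R) : R :=
  \big[Num.max/0]_(p : T * T | e p.1 p.2) `|x p.1 - x p.2|.

(* gamma(G) = min over F of gamma_x(G) (the minimum is attained, so it is the infimum) *)
Definition gamma : R := inf [set gamma_x x | x in feasible].

End Graph.

(* Main.v *)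
Require Import Defs.
From HB Require Import structures.
From mathcomp Require Import all_boot all_order all_algebra.
From mathcomp Require Import classical_sets reals.
From mathcomp Require Import complex polyrcf ring lra.
Set Implicit Arguments. Unset Strict Implicit.
Import Order.TTheory GRing.Theory Num.Theory.
Local Open Scope ring_scope.

Section Spec.
Local Open Scope sesquilinear_scope.

Lemma eig_map (R : rcfType) n (A : 'M[R]_n) (a : R) :
  eigenvalue (map_mx (real_complex R) A) (real_complex R a) = eigenvalue A a.
Proof.
by rewrite !eigenvalue_root_char -map_char_poly fmorph_root.
Qed.

Lemma sym_pos_eigen (R : rcfType) n (A : 'M[R]_n) : A^T = A ->
  0 < \sum_i \sum_j A i j -> exists2 a, eigenvalue A a & 0 < a.
Proof.
move=> Asym Apos.
set A' := map_mx (real_complex R) A.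
have freal : forall x : R, (real_complex R) x \is Num.real.
  by move=> x; rewrite realE ler0c -[0 : R[i]]/(real_complex R 0) lecR -realE num_real.
have Ah : A' \is hermsymmx.
  apply: realsym_hermsym.
    apply/is_hermitianmxP; rewrite expr0 scale1r map_mx_id //.
    by rewrite /A' map_trmx Asym.
  by apply/mxOverP => i j; rewrite mxE freal.
have Anorm := hermitian_normalmx Ah.
have dreal := hermitian_spectral_diag_real Ah.
set P := spectralmx A'.
set d := spectral_diag A'.
have Aeq : A' = invmx P *m diag_mx d *m P by apply/orthomx_spectralP.
have Pun : P \is unitarymx := spectral_unitarymx A'.
have PU : P \in unitmx := spectral_unit A'.
have [k dk] : exists k, 0 < d 0 k.
  apply/existsP; apply: contraT; rewrite negb_exists => /forallP dle.
  set u : 'rV[R[i]]_n := const_mx 1.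
  have L : (u *m A' *m u^T) 0 0 = (real_complex R) (\sum_i \sum_j A i j).
    rewrite !mxE exchange_big rmorph_sum; apply: eq_bigr => j _ /=.
    rewrite !mxE rmorph_sum big_distrl /=; apply: eq_bigr => i _.
    by rewrite !mxE mul1r mulr1.
  set w := u *m P^t*.
  have wT : P *m u^T = w^t*.
    rewrite /w trmx_mul map_mxM trmxCK; congr (_ *m _).
    by apply/matrixP => i j; rewrite !mxE rmorph1.
  have E : u *m A' *m u^T = w *m diag_mx d *m w^t*.
    by rewrite Aeq (invmx_unitary Pun) -wT /w !mulmxA.
  have : (u *m A' *m u^T) 0 0 <= 0.
    rewrite E mxE; apply: sumr_le0 => i _.
    rewrite mul_mx_diag !mxE -mulrA mulrC -mulrA.
    apply: mulr_le0_ge0.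
      have := dle i; rewrite (real_ltNge (real0 _) (mxOverP dreal 0 i)) negbK //.
    by rewrite mulrC mul_conjC_ge0.
  rewrite L -[0 : R[i]]/(real_complex R 0) lecR.
  by rewrite leNgt Apos.
exists (complex.Re (d 0 k)).
  rewrite -eig_map; apply/eigenvalueP; exists (row k P).
    have : (P *m A' = diag_mx d *m P).
      by rewrite Aeq !mulmxA mulmxV // mul1mx.
    move=> /(congr1 (row k)); rewrite -row_mul => ->.
    have -> : real_complex R (complex.Re (d 0 k)) = d 0 k.
      by have := ger0_Im (ltW dk); case: (d 0 k) => re im /= ->.
    by apply/rowP => j; rewrite mul_diag_mx !mxE.
  apply/eqP => /(congr1 (fun v => v *m invmx P)).
  rewrite rowE mulmxK // mul0mx => /matrixP /(_ 0 k).
  by rewrite !mxE !eqxx /= => /eqP; rewrite oner_eq0.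
by move: dk; rewrite ltcE => /andP[].
Qed.

End Spec.

Section G.
Variables (T : finType) (e : rel T).
Hypotheses (e_sym : symmetric e) (e_irr : irreflexive e)
  (e_conn : forall u v : T, connect e u v) (n_ge2 : (2 <= #|T|)%N).

Lemma walkP u v k :
  reflect (exists2 p : seq T, size p = k & path e u p && (last u p == v))
          (walk_of_len e u v k).
Proof.
apply: (iffP existsP) => [[p Hp]|[p sp Hp]].
  by exists (tval p); rewrite ?size_tuple.
by exists (tcast sp (in_tuple p)); rewrite val_tcast.
Qed.

Lemma walk_short u v : exists2 k, (k < #|T|)%N & walk_of_len e u v k.
Proof.
have /connectP [p pp ->] := e_conn u v.
case: (shortenP pp) => p' pp' up' _.
exists (size p').
  by have := max_card (mem (u :: p')); rewrite (card_uniqP up').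
by apply/walkP; exists p' => //; rewrite pp' eqxx.
Qed.

Lemma gdist_walk u v : walk_of_len e u v (gdist e u v) /\ (gdist e u v < #|T|)%N.
Proof.
have [k kn wk] := walk_short u v.
have hs : has (walk_of_len e u v) (iota 0 #|T|).
  by apply/hasP; exists k; rewrite ?mem_iota.
have := nth_find 0 hs; have := hs; rewrite has_find size_iota => lt.
by rewrite nth_iota.
Qed.

Lemma gdist_le u v k : walk_of_len e u v k -> (k < #|T|)%N -> (gdist e u v <= k)%N.
Proof.
move=> wk kn; rewrite leqNgt; apply/negP => /(before_find 0).
by rewrite nth_iota // wk.
Qed.

Lemma walk0 u : walk_of_len e u u 0.
Proof. by apply/walkP; exists [::]; rewrite //= eqxx. Qed.

Lemma gdist0 u : gdist e u u = 0%N.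
Proof. by apply/eqP; rewrite -leqn0 gdist_le ?walk0 // (leq_trans _ n_ge2). Qed.

Lemma gdist_pos u v : u != v -> (0 < gdist e u v)%N.
Proof.
move=> uv; rewrite lt0n; apply/eqP => d0.
have [] := gdist_walk u v; rewrite d0 => /walkP [p /size0nil -> /=].
by rewrite (negbTE uv).
Qed.

Lemma walk_rev u v k : walk_of_len e u v k -> walk_of_len e v u k.
Proof.
move=> /walkP [p sp /andP [pp /eqP lp]].
apply/walkP; exists (rev (belast u p)); first by rewrite size_rev size_belast.
apply/andP; split.
  rewrite -lp rev_path; apply: sub_path pp => x y; by rewrite e_sym.
case: p {sp pp} lp => [/= ->|y p _] //.
by rewrite /= rev_cons last_rcons.
Qed.

Lemma gdist_sym u v : gdist e u v = gdist e v u.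
Proof.
apply/eqP; rewrite eqn_leq; apply/andP; split.
  by have [w l] := gdist_walk v u; apply: gdist_le => //; apply: walk_rev.
by have [w l] := gdist_walk u v; apply: gdist_le => //; apply: walk_rev.
Qed.

Lemma gdist_edge w a b : e a b -> (gdist e w b <= (gdist e w a).+1)%N.
Proof.
move=> eab; have [wa la] := gdist_walk w a.
have [wb lb] := gdist_walk w b.
case: (ltnP (gdist e w a).+1 #|T|) => H; last by apply: leq_trans (ltnW lb) H.
apply: gdist_le => //.
move: wa => /walkP [p sp /andP [pp /eqP lp]].
apply/walkP; exists (rcons p b); first by rewrite size_rcons sp.
by rewrite rcons_path last_rcons pp lp eab eqxx.
Qed.

End G.

Section M.
Variable R : realType.

Lemma bigmax_scale (I : finType) (P : pred I) (F : I -> R) k : 0 <= k ->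
  \big[Num.max/0]_(i | P i) (k * F i) = k * \big[Num.max/0]_(i | P i) F i.
Proof.
move=> k0; symmetry.
apply: (big_morph (fun y => k * y)); last by rewrite mulr0.
by move=> y z; rewrite maxr_pMr.
Qed.

Lemma eig_core m (A : 'M[R]_m) (a : R) (v : 'rV_m) (M : R) :
  v *m A = a *: v -> (forall i j, 0 <= A i j) -> (forall i, `|v 0 i| <= M) ->
  forall k, `|a| * `|v 0 k| <= \sum_i `|v 0 i| * A i k /\
            \sum_i `|v 0 i| * A i k <= M * \sum_i A i k.
Proof.
move=> vA A0 vM k; split.
  rewrite -normrM; have := congr1 (fun w : 'rV[R]_m => w 0 k) vA.
  rewrite !mxE => <-; apply: le_trans (ler_norm_sum _ _ _) _.
  by apply: ler_sum => i _; rewrite normrM (ger0_norm (A0 i k)).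
rewrite big_distrr; apply: ler_sum => i _.
by apply: ler_wpM2r.
Qed.

Lemma eig_vec_max m (A : 'M[R]_m) (a : R) : eigenvalue A a ->
  exists v : 'rV_m, exists M, exists j,
  [/\ v *m A = a *: v, 0 < M, `|v 0 j| = M & forall i, `|v 0 i| <= M].
Proof.
move=> /eigenvalueP [v vA vn0].
have [i vi] : exists i, v 0 i != 0.
  apply/existsP; apply: contraT; rewrite negb_exists => /forallP H.
  move: vn0; apply: contraNT => _; apply/eqP/rowP => i.
  by have := H i; rewrite negbK mxE => /eqP.
have [j _ Mj] := @eq_bigmax _ _ _ 0 i xpredT (fun i => `|v 0 i|) isT
  (fun i _ => normr_ge0 _).
exists v, (\big[Num.max/0]_i `|v 0 i|), j; split => //.
- by apply: lt_le_trans (le_bigmax _ _ i); rewrite normr_gt0.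
- by move=> k; apply: le_bigmax.
Qed.

Lemma eig_bound m (A : 'M[R]_m) (a c : R) : eigenvalue A a ->
  (forall i j, 0 <= A i j) -> (forall k, \sum_i A i k <= c) -> `|a| <= c.
Proof.
move=> ea A0 Ac; have [v [M [j [vA M0 vj vM]]]] := eig_vec_max ea.
have [h1 h2] := eig_core vA A0 vM j.
rewrite vj in h1.
have := le_trans h1 h2; rewrite [M * _]mulrC => h.
rewrite -(ler_pM2r M0); apply: le_trans h _.
by rewrite ler_pM2r // Ac.
Qed.

Lemma eig_eq m (A : 'M[R]_m) (c : R) : eigenvalue A c ->
  (forall i j, 0 <= A i j) -> (forall i j, i != j -> 0 < A i j) ->
  (forall k, \sum_i A i k <= c) -> forall k, \sum_i A i k = c.
Proof.
move=> ec A0 Apos Ac; have [v [M [j [vA M0 vj vM]]]] := eig_vec_max ec.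
have allM : forall i, `|v 0 i| = M.
  have [h1 h2] := eig_core vA A0 vM j.
  rewrite vj in h1.
  have h3 : M * \sum_i A i j <= c * M.
    by rewrite mulrC ler_pM2r // Ac.
  have hc : c * M <= `|c| * M by rewrite ler_pM2r // real_ler_norm // num_real.
  have nn : forall i, xpredT i -> 0 <= M * A i j - `|v 0 i| * A i j.
    by move=> i _; rewrite subr_ge0; by apply: ler_wpM2r; [apply: A0 | apply: vM].
  have E : \sum_i (M * A i j - `|v 0 i| * A i j) = 0.
    apply/eqP; rewrite eq_le; apply/andP; split.
      rewrite sumrB -big_distrr subr_le0.
      by apply: le_trans h3 (le_trans hc h1).
    by apply: sumr_ge0.
  move=> i; have [->//|ij] := eqVneq i j.
  have : M * A i j - `|v 0 i| * A i j = 0 := psumr_eq0P nn E isT.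
  move=> /eqP; rewrite -mulrBl; rewrite mulf_eq0 (gt_eqF (Apos _ _ ij)) orbF subr_eq0.
  by move=> /eqP <-.
move=> k; apply/eqP; rewrite eq_le Ac /=.
have [h1 h2] := eig_core vA A0 vM k.
rewrite allM in h1.
have hc : c * M <= `|c| * M by rewrite ler_pM2r // real_ler_norm // num_real.
have := le_trans hc (le_trans h1 h2).
by rewrite mulrC ler_pM2l.
Qed.

End M.

Section Main.
Variables (R : realType) (T : finType) (e : rel T).
Hypotheses (e_sym : symmetric e) (e_irr : irreflexive e)
  (e_conn : forall u v : T, connect e u v) (n_ge2 : (2 <= #|T|)%N).

Local Notation D := (distmx e R).

Lemma D_E i j : D i j = (gdist e (enum_val i) (enum_val j))%:R.
Proof. by rewrite mxE. Qed.

Lemma D_ge0 i j : 0 <= D i j.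
Proof. by rewrite mxE ler0n. Qed.

Lemma D_pos i j : i != j -> 0 < D i j.
Proof.
move=> ij; rewrite mxE ltr0n (gdist_pos e_conn) //.
by rewrite (inj_eq enum_val_inj).
Qed.

Lemma D_col k : \sum_i D i k = (transmission e (enum_val k))%:R.
Proof.
rewrite /transmission natr_sum.
rewrite (eq_bigr (fun i => (gdist e (enum_val k) (enum_val i))%:R)); last by move=> i _; rewrite D_E (gdist_sym e_sym e_conn).
rewrite -(big_enum_val (fun v => (gdist e (enum_val k) v)%:R)).
by apply: eq_bigl.
Qed.

Lemma D_sym : D^T = D.
Proof. by apply/matrixP => i j; rewrite !mxE (gdist_sym e_sym e_conn). Qed.

Lemma D_sum_pos : 0 < \sum_i \sum_j D i j.
Proof.
have n0 : (0 < #|T|)%N by apply: leq_trans n_ge2.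
have n1 : (1 < #|T|)%N by [].
pose i0 := Ordinal n0; pose i1 := Ordinal n1.
have i01 : i0 != i1 by [].
rewrite (bigD1 i0) //= (bigD1 i1) //= -addrA.
apply: (lt_le_trans (D_pos i01)); rewrite lerDl.
apply: addr_ge0; apply: sumr_ge0 => i _; rewrite ?D_ge0 //.
by apply: sumr_ge0 => j _; apply: D_ge0.
Qed.

Lemma gx_ge0 (x : T -> R) : 0 <= gamma_x e x.
Proof. exact: bigmax_ge_id. Qed.

Lemma gx_edge (x : T -> R) a b : e a b -> `|x a - x b| <= gamma_x e x.
Proof.
move=> eab.
exact: (@le_bigmax_cond _ R (T * T)%type 0 (a, b) (fun p : T * T => e p.1 p.2)
   (fun p : T * T => `|x p.1 - x p.2|) eab).
Qed.

Lemma gx_walk (x : T -> R) u v k :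
  walk_of_len e u v k -> `|x u - x v| <= k%:R * gamma_x e x.
Proof.
move=> /walkP [p <- /andP [pp /eqP lp]].
elim: p u pp lp => [|y p IH] u /=.
  by move=> _ ->; rewrite subrr normr0 mul0r.
move=> /andP [euy pp] lp.
apply: le_trans (ler_distD (x y) _ _) _.
rewrite -addn1 natrD mulrDl mul1r addrC lerD //.
  exact: IH.
exact: gx_edge.
Qed.

Lemma feas_max (x : T -> R) : feasible x -> exists u, `|x u| = 1.
Proof.
move=> [_ sn].
have n0 : (0 < #|T|)%N by apply: leq_trans n_ge2.
have [v0 _] := card_gt0P n0.
have [u _ Mu] := @eq_bigmax _ _ _ 0 v0 xpredT (fun v => `|x v|) isT
  (fun i _ => normr_ge0 _).
by exists u; rewrite -Mu.
Qed.

Lemma lb_feas (x : T -> R) : feasible x ->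
  exists u, #|T|%:R <= gamma_x e x * (transmission e u)%:R.
Proof.
move=> fx; have [u xu] := feas_max fx; exists u.
have [sx _] := fx.
have E : \sum_v (x u - x v) = #|T|%:R * x u.
  rewrite sumrB sx subr0 sumr_const mulr_natl.
  by rewrite cardE /= -cardT.
have : `|#|T|%:R * x u| = #|T|%:R by rewrite normrM xu mulr1 normr_nat.
move=> <-; rewrite -E; apply: le_trans (ler_norm_sum _ _ _) _.
rewrite /transmission natr_sum big_distrr; apply: ler_sum => v _.
rewrite [X in _ <= X]mulrC; apply: gx_walk.
by have [] := gdist_walk e_conn u v.
Qed.

Lemma ub_feas w : exists y : T -> R, feasible y /\
  gamma_x e y <= #|T|%:R / (transmission e w)%:R.
Proof.
have n0 : (0 < #|T|)%N by apply: leq_trans n_ge2.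
set t := (transmission e w)%:R : R.
have tpos : 0 < t.
  have [v wv] : exists v, v != w.
    have : (1 < #|T|)%N := n_ge2.
    rewrite (cardD1 w) => /card_gt0P [v]; rewrite !inE => /andP [vw _].
    by exists v.
  rewrite ltr0n /transmission (bigD1 v) //= addn_gt0 (gdist_pos e_conn) //.
  by rewrite eq_sym.
set c := #|T|%:R / t.
have c0 : 0 <= c by rewrite divr_ge0 // ltW.
pose x := fun v => 1 - c * (gdist e w v)%:R.
have sx : \sum_v x v = 0.
  rewrite sumrB sumr_const -big_distrr /= -natr_sum.
  rewrite -/(transmission e w) -/t /c mulfVK ?gt_eqF //.
  by rewrite cardE /= -cardT subrr.
have gx : gamma_x e x <= c.
  apply: bigmax_le => // [[a b]] /= eab.
  have -> : x a - x b = c * ((gdist e w b)%:R - (gdist e w a)%:R) by rewrite /x; ring.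
  rewrite normrM (ger0_norm c0).
  rewrite -[X in _ <= X]mulr1 ler_wpM2l //.
  have h1 := gdist_edge e_conn w eab.
  have eba : e b a by rewrite e_sym.
  have h2 := gdist_edge e_conn w eba.
  move: h1 h2; rewrite -!(ler_nat R) -!natr1 => h1 h2.
  by rewrite ler_norml; apply/andP; split; lra.
set M := sup_norm x.
have M1 : 1 <= M.
  have := @le_bigmax _ R T 0 (fun v => `|x v|) w.
  by rewrite /x (gdist0 e n_ge2) mulr0 subr0 normr1.
have M0 : 0 < M by apply: lt_le_trans M1.
have Mi0 : 0 <= M^-1 by rewrite invr_ge0 ltW.
pose y := fun v => M^-1 * x v.
exists y; split; first split.
- by rewrite /y -big_distrr /= sx mulr0.
- rewrite /sup_norm /y.
  under eq_bigr do rewrite normrM (ger0_norm Mi0).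
  by rewrite bigmax_scale // -/(sup_norm x) -/M mulVf // gt_eqF.
- rewrite /gamma_x /y.
  under eq_bigr do rewrite -mulrBr normrM (ger0_norm Mi0).
  rewrite bigmax_scale // -/(gamma_x e x).
  apply: le_trans gx; rewrite ler_piMl ?gx_ge0 //.
  by rewrite invf_le1.
Qed.

End Main.

Section SupEig.
Local Open Scope classical_set_scope.

Lemma sup_in_eig (R : realType) m (A : 'M[R]_m) a0 :
  eigenvalue A a0 -> has_ubound [set a | eigenvalue A a] ->
  eigenvalue A (sup [set a | eigenvalue A a]).
Proof.
move=> ea0 hub; set S := [set a | eigenvalue A a].
apply: contraT => /negP nS.
have strict := sup_ub_strict hub nS.
set s := rootsR (char_poly A).
have pn0 : char_poly A != 0 by apply: monic_neq0; apply: char_poly_monic.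
have ins : forall a, eigenvalue A a -> a \in s.
  move=> a ea; have := roots_on_rootsR pn0 a.
  by rewrite -eigenvalue_root_char ea andbT in_itv /= => <-.
pose mx := \big[Num.max/a0]_(x <- s | eigenvalue A x) x.
have Smx : eigenvalue A mx.
  rewrite /mx; elim/big_ind: _ => //.
  by move=> x y ex ey; case: leP.
have ub : forall a, S a -> a <= mx.
  by move=> a ea; rewrite /mx; exact: (le_bigmax_seq a0 a (fun x => eigenvalue A x) id (ins a ea) ea).
have := strict mx Smx; rewrite /= ltNge.
by rewrite ge_sup //; exists a0.
Qed.

End SupEig.

Theorem theorem4p1 (R : realType) (T : finType) (e : rel T)
  (e_sym : symmetric e) (e_irr : irreflexive e)
  (e_conn : forall u v : T, connect e u v) (n_ge2 : (2 <= #|T|)%N) :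
  gamma e R <= #|T|%:R / dist_spec_radius e R /\
  (gamma e R = #|T|%:R / dist_spec_radius e R <-> transmission_regular e).
Proof.
have n0 : (0 < #|T|)%N by apply: leq_trans n_ge2.
have npos : 0 < #|T|%:R :> R by rewrite ltr0n.
have [w0 _] := card_gt0P n0.
case: (@arg_maxnP T w0 xpredT (transmission e) isT) => wm _ Hwm.
set tm := (transmission e wm)%:R : R.
set S := [set a : R | eigenvalue (distmx e R) a]%classic.
have rhoE : dist_spec_radius e R = sup S by [].
rewrite rhoE.
have colle : forall k, \sum_i distmx e R i k <= tm.
  by move=> k; rewrite (D_col R e_sym e_conn) ler_nat; apply: Hwm.
have Sb : forall a, S a -> a <= tm.
  move=> a Sa; apply: le_trans (eig_bound Sa (D_ge0 R e) colle).
  exact: ler_norm.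
have hub : has_ubound S by exists tm => a Sa; exact: Sb.
have [a0 Sa0 a0pos] := @sym_pos_eigen _ _ _ (D_sym R e_sym e_conn) (D_sum_pos R e_conn n_ge2).
have rho_pos : 0 < sup S by apply: lt_le_trans a0pos (ub_le_sup hub Sa0).
have rho_le : sup S <= tm by apply: ge_sup; [exists a0 | exact: Sb].
have rho_in : S (sup S) := sup_in_eig Sa0 hub.
have tpos : 0 < tm by apply: lt_le_trans rho_pos rho_le.
have hlb : has_lbound [set gamma_x e x | x in feasible (R := R)]%classic.
  by exists 0 => _ [x _ <-]; exact: gx_ge0.
have [y [fy gy]] := ub_feas R e_sym e_conn n_ge2 wm.
have gle : gamma e R <= #|T|%:R / tm.
  apply: le_trans gy; apply: (ge_inf hlb); by exists y.
have key : #|T|%:R / tm <= #|T|%:R / sup S.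
  by apply: ler_wpM2l; [exact: ltW | rewrite lef_pV2 ?posrE].
split; first exact: le_trans gle key.
split.
- move=> geq.
  have : #|T|%:R / sup S <= #|T|%:R / tm by rewrite -geq.
  rewrite ler_pM2l // lef_pV2 ?posrE // => h.
  have rt : sup S = tm by apply/eqP; rewrite eq_le rho_le h.
  rewrite rt in rho_in.
  have ceq := eig_eq rho_in (D_ge0 R e) (D_pos R e_conn) colle.
  have allt : forall u, transmission e u = transmission e wm.
    move=> u; have := ceq (enum_rank u).
    by rewrite (D_col R e_sym e_conn) enum_rankK => /eqP; rewrite eqr_nat => /eqP.
  by move=> u v; rewrite !allt.
- move=> H.
  have colt : forall k, \sum_i distmx e R i k = tm.
    by move=> k; rewrite (D_col R e_sym e_conn) /tm (H _ wm).
  have Stm : S tm.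
    apply/eigenvalueP; exists (const_mx 1).
      apply/rowP => k; rewrite !mxE -(colt k).
      by rewrite mulr1; apply: eq_bigr => i _; rewrite mxE mul1r.
    apply/eqP => /rowP /(_ (Ordinal n0)); rewrite !mxE => /eqP.
    by rewrite oner_eq0.
  have rt : sup S = tm.
    by apply/eqP; rewrite eq_le rho_le (ub_le_sup hub Stm).
  rewrite rt; apply/eqP; rewrite eq_le gle /=.
  apply: lb_le_inf; first by exists (gamma_x e y), y.
  move=> _ [x fx <-]; have [u hu] := lb_feas e_conn n_ge2 fx.
  rewrite (H u wm) -/tm in hu.
  by rewrite ler_pdivrMr.
Qed.
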